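(* Let $q$ be a prime power, let $k\ge 3$ and $n=2k\le q$, and let $h=(k-1)+r$ with $1\le r\le k-2$. Let $\alpha_1,\dots,\alpha_n\in\mathbb{F}_q$ be pairwise distinct, let $G_{h,k}$ be the $k\times n$ matrix whose rows are $(\alpha_1^{e},\dots,\alpha_n^{e})$ for $e=0,1,\dots,k-2$ and $e=h$, and for $\mathbf v=(v_1,\dots,v_n)\in(\mathbb{F}_q^* )^n$ let $C_{h,\mathbf v}$ be the linear code generated by $G_{h,k}\cdot\mathrm{diag}(v_1,\dots,v_n)$. Let $u_i=\prod_{j\ne i}(\alpha_i-\alpha_j)^{-1}$ and $S_1=\alpha_1+\dots+\alpha_n$. Then there exists $\mathbf v\in(\mathbb{F}_q^* )^n$ such that $C_{h,\mathbf v}$ is self-dual if and only if $r=1$ and the following hold: (i) either all $u_i$ ($1\le i\le n$) are squares in $\mathbb{F}_q$, or all $u_i$ are non-squares in $\mathbb{F}_q$; (ii) $S_1=0$.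
   Context: Convention: $0^0=1$. A linear code $C$ is self-dual if $C=C^\perp$, where $C^\perp$ is the dual with respect to the Euclidean inner product. *)

(* Defs.v *)
From HB Require Import structures.
From mathcomp Require Import all_boot all_order all_algebra all_field.
Set Implicit Arguments. Unset Strict Implicit. Unset Printing Implicit Defensive.
Import GRing.Theory.
Local Open Scope ring_scope.

Definition Ghk (F : fieldType) (n k h : nat) (alpha : 'I_n -> F) : 'M[F]_(k, n) :=
  \matrix_(i < k, j < n) alpha j ^+ (if (i < k.-1)%N then nat_of_ord i else h).

Definition Chv_gen (F : fieldType) (n k h : nat) (alpha v : 'I_n -> F) : 'M[F]_(k, n) :=
  Ghk k h alpha *m diag_mx (\row_j v j).

(* The linear code generated by the rows of M is its row space; x is in the code
   iff (x <= M)%MS.  The Euclidean dual consists of the x orthogonal to every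
   codeword.  Self-dual: C = C^perp. *)
Definition self_dual (F : fieldType) (m n : nat) (M : 'M[F]_(m, n)) : Prop :=
  forall x : 'rV[F]_n,
    (x <= M)%MS <-> (forall c : 'rV[F]_n, (c <= M)%MS -> x *m c^T = 0).

Definition is_square (F : fieldType) (a : F) : Prop := exists b : F, a = b ^+ 2.

Definition u_coef (F : fieldType) (n : nat) (alpha : 'I_n -> F) (i : 'I_n) : F :=
  \prod_(j < n | j != i) (alpha i - alpha j)^-1.

(* Main.v *)
Require Import Defs.
From HB Require Import structures.
From mathcomp Require Import all_boot all_order all_algebra all_field.
From mathcomp Require Import zify ring.
Import GRing.Theory.
Local Open Scope ring_scope.

Lemma sq_bool (F : finFieldType) (x : F) : (exists y, x = y ^+ 2) <-> [exists y, x == y ^+ 2].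
Proof. split; [by case=> y ->; apply/existsP; exists y|by case/existsP=> y /eqP->; exists y]. Qed.

Lemma nonsq_mul (F : finFieldType) (a b : F) :
  ~ (exists y, a = y ^+ 2) -> ~ (exists y, b = y ^+ 2) -> exists y, a * b = y ^+ 2.
Proof.
move=> na nb.
have a0 : a != 0 by apply/eqP=> a0; apply: na; exists 0; rewrite a0 expr0n.
have b0 : b != 0 by apply/eqP=> b0; apply: nb; exists 0; rewrite b0 expr0n.
pose sq (x : F) := [exists y, x == y ^+ 2].
pose S := [set x : F | (x != 0) && sq x].
pose N := [set x : F | (x != 0) && ~~ sq x].
pose Z := [set x : F | x != 0].
pose rt (x : F) := odflt 0 [pick y | x == y ^+ 2].
have rtP x : sq x -> x = rt x ^+ 2.
  rewrite /rt; case: pickP => [y /eqP -> //|H /existsP [y]]; by rewrite H.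
have c1 : (#|Z| <= 2 * #|S|)%N.
  have sub : Z \subset rt @: S :|: (fun x => - rt x) @: S.
    apply/subsetP=> x; rewrite inE => x0.
    have Sx : x ^+ 2 \in S by rewrite inE expf_neq0 //=; apply/existsP; exists x.
    have := rtP (x ^+ 2) (introT existsP (ex_intro (fun y => x ^+ 2 == y ^+ 2) x (eqxx _))).
    move/eqP; rewrite eq_sym -subr_eq0 subr_sqr mulf_eq0 subr_eq0 addr_eq0.
    case/orP=> /eqP E; rewrite inE; apply/orP; [left|right]; apply/imsetP; exists (x ^+ 2) => //; by rewrite E ?opprK.
  apply: leq_trans (subset_leq_card sub) _.
  rewrite cardsU mul2n -addnn; apply: leq_trans (leq_subr _ _) _.
  by apply: leq_add; apply: leq_imset_card.
have c2 : (#|S| + #|N| = #|Z|)%N.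
  rewrite -cardsUI.
  have -> : S :&: N = set0 :> {set F} by apply/setP=> x; rewrite !inE; case: (sq x); rewrite ?andbF.
  rewrite cards0 addn0; apply: eq_card=> x; rewrite !inE; case: (sq x); rewrite ?andbT ?andbF ?orbF.
  1,2: by [].
have sub2 : (fun x => a * x) @: S \subset N.
  apply/subsetP=> z /imsetP [s]; rewrite inE => /andP [s0 /existsP [c /eqP sc]] ->.
  rewrite inE mulf_neq0 //=; apply/existsP=> [[y /eqP ay]]; apply: na.
  have c0 : c != 0 by apply: contraNneq s0 => c0; rewrite sc c0 expr0n.
  exists (y / c); rewrite expr_div_n -ay sc mulfK // expf_neq0 //.
have inj : injective (fun x : F => a * x) by apply: mulfI.
have cS : #|(fun x => a * x) @: S| = #|S| by apply: card_imset.
have cN : #|(fun x => a * x) @: S| = #|N|.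
  apply/eqP; rewrite eqn_leq subset_leq_card //= cS.
  rewrite -(leq_add2l #|S|) c2 addnn -mul2n; done.
case: (boolP [exists y, a * b == y ^+ 2]) => [/existsP [y /eqP ->]|nab]; first by exists y.
exfalso.
have : a * b \in N by rewrite inE mulf_neq0 //=; exact: nab.
move/(subset_cardP cN): sub2 => <- /imsetP [s]; rewrite inE => /andP [_ /existsP [c /eqP sc]] /mulfI bs.
apply: nb; exists c; by rewrite bs.
Qed.

Section Interp.
Variables (F : fieldType) (n : nat) (alpha : 'I_n -> F).
Hypothesis inj : injective alpha.

Definition Lp (j : 'I_n) : {poly F} := \prod_(i < n | i != j) ('X - (alpha i)%:P).
Definition Pp : {poly F} := \prod_(i < n) ('X - (alpha i)%:P).

Lemma poly_roots0 (q : {poly F}) : (size q <= n)%N -> (forall j, q.[alpha j] = 0) -> q = 0.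
Proof.
move=> sq r0; apply: (@roots_geq_poly_eq0 _ q [seq alpha j | j <- enum 'I_n]).
- by apply/allP=> x /mapP [j _ ->]; apply/rootP.
- by rewrite map_inj_uniq ?enum_uniq.
- by rewrite size_map size_enum_ord.
Qed.

Lemma size_ie : size (index_enum 'I_n) = n.
Proof. by rewrite [index_enum _]unlock -enumT size_enum_ord. Qed.

Lemma size_Pp : size Pp = n.+1.
Proof. by rewrite /Pp size_prod_XsubC size_ie. Qed.

Lemma Pp_split j : Pp = Lp j * ('X - (alpha j)%:P).
Proof. by rewrite /Pp (bigD1 j) //= mulrC. Qed.

Lemma size_Lp j : size (Lp j) = n.
Proof.
have := size_Pp; rewrite (Pp_split j) size_Mmonic ?monicXsubC //.
  by rewrite size_XsubC addn2 => -[].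
apply: monic_neq0; exact: monic_prod_XsubC.
Qed.

Lemma coef_Lp j : (Lp j)`_n.-1 = 1.
Proof. by rewrite -(size_Lp j) -lead_coefE; apply/eqP; apply: monic_prod_XsubC. Qed.

Lemma Lp_other j i : i != j -> (Lp j).[alpha i] = 0.
Proof.
move=> ij; rewrite /Lp horner_prod (bigD1 i) //= hornerXsubC subrr mul0r //.
Qed.

Lemma Lp_self_neq0 j : (Lp j).[alpha j] != 0.
Proof.
rewrite /Lp horner_prod; apply/prodf_neq0 => i ij.
by rewrite hornerXsubC subr_eq0; apply: contra ij => /eqP /inj ->.
Qed.

Lemma u_Lp j : u_coef alpha j * (Lp j).[alpha j] = 1.
Proof.
rewrite /u_coef prodfV /Lp horner_prod.
under [X in _ * X]eq_bigr do rewrite hornerXsubC.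
apply: mulVf.
have := Lp_self_neq0 j; rewrite /Lp horner_prod.
by under eq_bigr do rewrite hornerXsubC.
Qed.

Lemma interp (q : {poly F}) : (size q <= n)%N ->
  q = \sum_(j < n) (q.[alpha j] * u_coef alpha j) *: Lp j.
Proof.
move=> sq; apply/eqP; rewrite -subr_eq0; apply/eqP; apply: poly_roots0.
  apply: leq_trans (size_polyD _ _) _; rewrite geq_max sq size_polyN /=.
  apply: (big_ind (fun p : {poly F} => size p <= n)%N) => //.
  - by rewrite size_poly0.
  - by move=> p1 p2 h1 h2; apply: leq_trans (size_polyD _ _) _; rewrite geq_max h1 h2.
  - by move=> j _; apply: leq_trans (size_scale_leq _ _) _; rewrite size_Lp.
move=> i; rewrite hornerD hornerN horner_sum (bigD1 i) //= big1 ?addr0.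
  by rewrite hornerZ -mulrA u_Lp mulr1 subrr.
by move=> j ji; rewrite hornerZ Lp_other ?mulr0 // eq_sym.
Qed.

Lemma interp_coef (q : {poly F}) : (size q <= n)%N ->
  q`_n.-1 = \sum_(j < n) q.[alpha j] * u_coef alpha j.
Proof.
move=> sq; rewrite {1}(interp q sq) coef_sum; apply: eq_bigr => j _.
by rewrite coefZ coef_Lp mulr1.
Qed.

Lemma sum_u_pow m : (m < n)%N ->
  \sum_(j < n) u_coef alpha j * alpha j ^+ m = (m == n.-1)%:R.
Proof.
move=> mn; have := interp_coef 'X^m; rewrite size_polyXn coefXn eq_sym => -> //.
by apply: eq_bigr => j _; rewrite hornerXn mulrC.
Qed.

Lemma Pp_coef_gen (s : seq F) x :
  (\prod_(y <- x :: s) ('X - y%:P))`_(size s) = - \sum_(y <- x :: s) y.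
Proof.
elim: s x => [|y s IH] x.
  rewrite big_cons big_nil mulr1 big_cons big_nil addr0 coefB coefX coefC /=. by rewrite sub0r.
rewrite big_cons mulrBl coefB coefXM coefCM /=.
rewrite IH big_cons [in RHS]big_cons.
have -> : (('X - y%:P) * \prod_(j <- s) ('X - j%:P))`_(size s).+1 = 1.
  have hs := size_prod_XsubC (y :: s) id.
  have hl := lead_coef_prod_XsubC (y :: s) xpredT id.
  rewrite big_cons /= in hs hl.
  by rewrite lead_coefE hs in hl.
by rewrite mulr1 opprD addrC.
Qed.

Lemma Pp_coef : (0 < n)%N -> Pp`_n.-1 = - \sum_(i < n) alpha i.
Proof.
move=> n0; rewrite /Pp -(big_map alpha xpredT (fun y => 'X - y%:P)).
rewrite -[in RHS](big_map alpha xpredT (fun y => y)).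
have : size [seq alpha i | i <- index_enum 'I_n] = n by rewrite size_map size_ie.
case: [seq alpha i | i <- index_enum 'I_n] => [|x s] /=; first by move=> n00; move: n0; rewrite -n00.
by move=> <-; rewrite Pp_coef_gen.
Qed.

Lemma Pp_root j : Pp.[alpha j] = 0.
Proof. by rewrite (Pp_split j) hornerM hornerXsubC subrr mulr0. Qed.

Lemma sum_u_pow_n : (0 < n)%N ->
  \sum_(j < n) u_coef alpha j * alpha j ^+ n = \sum_(i < n) alpha i.
Proof.
move=> n0.
have sq : leq (size ('X^n - Pp)) n.
  apply/leq_sizeP => j jn; rewrite coefB coefXn.
  rewrite leq_eqVlt in jn; case/orP: jn => [/eqP <-|nj].
    by rewrite eqxx -[n in Pp`_n]/(n.+1.-1) -size_Pp -lead_coefE (eqP (monic_prod_XsubC _ _ _)) subrr.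
  by rewrite nth_default ?size_Pp // (gtn_eqF nj) subrr.
have := interp_coef _ sq.
rewrite coefB coefXn Pp_coef // (_ : (n.-1 == n) = false); last by case: n n0 {sq} => //= n' _; rewrite eqn_leq ltnn andbF.
rewrite sub0r opprK => ->; apply: eq_bigr => j _.
by rewrite hornerD hornerN Pp_root subr0 hornerXn mulrC.
Qed.

Lemma vanish (z : 'I_n -> F) :
  (forall m, (m < n)%N -> \sum_(j < n) z j * alpha j ^+ m = 0) -> forall i, z i = 0.
Proof.
move=> H i.
have : \sum_(j < n) z j * (Lp i).[alpha j] = 0.
  under eq_bigr do rewrite (horner_coef_wide _ (eq_leq (size_Lp i))) mulr_sumr.
  rewrite exchange_big /= big1 // => m _.
  transitivity ((Lp i)`_m * \sum_(j < n) z j * alpha j ^+ m); last by rewrite H ?mulr0.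
  rewrite mulr_sumr; apply: eq_bigr => j _.
  by rewrite mulrCA.
rewrite (bigD1 i) //= big1 ?addr0.
  by move/eqP; rewrite mulf_eq0 (negPf (Lp_self_neq0 i)) orbF => /eqP.
by move=> j ji; rewrite Lp_other ?mulr0.
Qed.

End Interp.

Lemma self_dual_orth (F : fieldType) m n (M : 'M[F]_(m, n)) :
  self_dual M -> M *m M^T = 0.
Proof.
move=> sd; apply/matrixP=> i i'.
have := (proj1 (sd (row i M))) (row_sub i M) (row i' M) (row_sub i' M).
move/matrixP/(_ 0 0); rewrite !mxE => E; rewrite -[RHS]E.
by apply: eq_bigr => l _; rewrite !mxE.
Qed.

Lemma self_dual_of (F : fieldType) m n (M : 'M[F]_(m, n)) :
  n = (m + m)%N -> row_free M -> M *m M^T = 0 -> self_dual M.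
Proof.
move=> nE rf MM x; split.
  move=> /submxP [a ->] c /submxP [b ->].
  by rewrite trmx_mul !mulmxA -(mulmxA a) MM mulmx0 mul0mx.
move=> H.
have xK : (x <= kermx M^T)%MS.
  apply/sub_kermxP; apply/matrixP=> i j; rewrite (ord1 i).
  have := H (row j M) (row_sub j M); move/matrixP/(_ 0 0); rewrite !mxE => E.
  rewrite -[RHS]E; by apply: eq_bigr => l _; rewrite !mxE.
have MK : (M <= kermx M^T)%MS by apply/sub_kermxP.
have rk : \rank M = \rank (kermx M^T).
  rewrite mxrank_ker mxrank_tr (eqP rf) nE; lia.
have := mxrank_leqif_eq MK; rewrite rk => /leqif_refl /idP Heq.
by rewrite (eqmxP Heq).
Qed.

Lemma Chv_entry (F : fieldType) n k h (alpha v : 'I_n -> F) i j :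
  Chv_gen k h alpha v i j = alpha j ^+ (if (i < k.-1)%N then nat_of_ord i else h) * v j.
Proof. by rewrite /Chv_gen mul_mx_diag !mxE. Qed.

Lemma gram (F : fieldType) n k h (alpha v : 'I_n -> F) i i' :
  (Chv_gen k h alpha v *m (Chv_gen k h alpha v)^T) i i' =
  \sum_j v j ^+ 2 * alpha j ^+ ((if (i < k.-1)%N then nat_of_ord i else h) +
                                (if (i' < k.-1)%N then nat_of_ord i' else h)).
Proof.
rewrite mxE; apply: eq_bigr => j _; rewrite [_^T _ _]mxE !Chv_entry exprD; ring.
Qed.

Lemma Chv_row_free (F : fieldType) n k h (alpha v : 'I_n -> F) :
  injective alpha -> (forall j, v j != 0) -> (h < n)%N -> (k.-1 <= h)%N ->
  row_free (Chv_gen k h alpha v).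
Proof.
move=> inj v0 hn kh.
pose E (i : 'I_k) := if (i < k.-1)%N then nat_of_ord i else h.
have En i : (E i < n)%N by rewrite /E; case: ifP => [/leq_trans ->//|]; lia.
have Einj i i' : E i = E i' -> i = i'.
  rewrite /E; move: (ltn_ord i) (ltn_ord i') => ik i'k.
  by case: ifP => H1; case: ifP => H2 => E12; apply: val_inj => /=; lia.
rewrite -kermx_eq0; apply/eqP/row_matrixP => i; rewrite row0.
set a := row i (kermx _).
have aM : a *m Chv_gen k h alpha v = 0 by rewrite -row_mul mulmx_ker row0.
pose p := \sum_(l < k) a 0 l *: 'X^(E l).
have p0 : p = 0.
  apply: (@poly_roots0 F n alpha inj).
    apply: (big_ind (fun q : {poly F} => size q <= n)%N).
    - by rewrite size_poly0.
    - by move=> p1 p2 h1 h2; apply: leq_trans (size_polyD _ _) _; rewrite geq_max h1 h2.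
    - by move=> l _; apply: leq_trans (size_scale_leq _ _) _; rewrite size_polyXn.
  move=> j; have := congr1 (fun A : 'M[F]_(1, n) => A 0 j) aM; rewrite !mxE.
  under eq_bigr do rewrite Chv_entry.
  under eq_bigr do rewrite mulrA; rewrite -mulr_suml => /eqP; rewrite mulf_eq0 (negPf (v0 j)) orbF => /eqP <-.
  rewrite horner_sum; apply: eq_bigr => l _; by rewrite hornerZ hornerXn.
apply/rowP => l; rewrite [RHS]mxE.
have := congr1 (fun q : {poly F} => q`_(E l)) p0; rewrite /= coef0 /p coef_sum (bigD1 l) //= big1.
  by rewrite coefZ coefXn eqxx mulr1 addr0.
move=> l' ll'; rewrite coefZ coefXn; case: eqP => [/Einj E12|]; last by rewrite mulr0.
by move: ll'; rewrite E12 eqxx.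
Qed.

Theorem theorem4p14 (F : finFieldType) (k r n : nat) (alpha : 'I_n -> F) :
  (3 <= k)%N -> n = (2 * k)%N -> (n <= #|F|)%N ->
  (1 <= r)%N -> (r <= k - 2)%N ->
  injective alpha ->
  (exists v : 'I_n -> F, (forall i, v i != 0) /\
      self_dual (Chv_gen k (k - 1 + r) alpha v))
  <->
  (r = 1%N /\
   ((forall i, is_square (u_coef alpha i)) \/ (forall i, ~ is_square (u_coef alpha i))) /\
   \sum_(i < n) alpha i = 0).
Proof.
move=> k3 nE nF r1 rk inj.
set h := (k - 1 + r)%N.
have n0 : (0 < n)%N by lia.
pose i0 : 'I_n := Ordinal n0.
pose u := u_coef alpha.
have u0 j : u j != 0.
  apply/eqP=> uj; have := @u_Lp F n alpha inj j; rewrite -/u uj mul0r => /eqP.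
  by rewrite eq_sym oner_eq0.
have sumu m : (m < n.-1)%N -> \sum_(j < n) u j * alpha j ^+ m = 0.
  move=> mn; rewrite (@sum_u_pow F n alpha inj m); last by lia.
  by rewrite (_ : (m == n.-1) = false) //; apply/negbTE/eqP; lia.
have sumu1 : \sum_(j < n) u j * alpha j ^+ n.-1 = 1.
  by rewrite (@sum_u_pow F n alpha inj n.-1) ?eqxx //; lia.
have sumun : \sum_(j < n) u j * alpha j ^+ n = \sum_(i < n) alpha i.
  exact: (@sum_u_pow_n F n alpha inj n0).
split.
- case=> v [v0 sd].
  have MM := self_dual_orth _ _ _ _ sd.
  pose T m := \sum_(j < n) v j ^+ 2 * alpha j ^+ m.
  have Tz m : ((m <= 2 * k - 4)%N \/ ((h <= m)%N /\ (m <= h + (k - 2))%N)) \/ m = (h + h)%N ->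
      T m = 0.
    move=> cov.
    have [i [i' ->]] : exists i i' : 'I_k,
        m = ((if (i < k.-1)%N then nat_of_ord i else h) +
             (if (i' < k.-1)%N then nat_of_ord i' else h))%N.
      have kk : (k.-1 < k)%N by lia.
      have hE : (if (Ordinal kk < k.-1)%N then nat_of_ord (Ordinal kk) else h) = h.
        by rewrite /= ltnn.
      have aE a (ak : (a < k.-1)%N) : exists i : 'I_k,
          (if (i < k.-1)%N then nat_of_ord i else h) = a.
        have ak' : (a < k)%N by lia.
        by exists (Ordinal ak'); rewrite /= ak.
      case: cov => [[c1|[c1 c2]]|->].
      + case: (leqP m (k - 2)) => mk.
          have [i Ei] := aE m ltac:(lia); have [i' Ei'] := aE 0%N ltac:(lia).
          by exists i, i'; rewrite Ei Ei' addn0.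
        have [i Ei] := aE (k - 2)%N ltac:(lia); have [i' Ei'] := aE (m - (k - 2))%N ltac:(lia).
        by exists i, i'; rewrite Ei Ei'; lia.
      + have [i' Ei'] := aE (m - h)%N ltac:(lia).
        by exists (Ordinal kk), i'; rewrite hE Ei'; lia.
      + by exists (Ordinal kk), (Ordinal kk); rewrite hE.
    by rewrite /T -gram MM mxE.
  have r_eq : r = 1%N.
    apply/eqP; rewrite eqn_leq r1 andbT; apply/negP => r2.
    have := @vanish F n alpha inj (fun j => v j ^+ 2) (fun m mn => Tz m ltac:(lia)) i0.
    by move/eqP; rewrite expf_eq0 /= (negPf (v0 i0)).
  split => //.
  pose l := T n.-1.
  have wl j : v j ^+ 2 = l * u j.
    apply/eqP; rewrite -subr_eq0; apply/eqP.
    apply: (@vanish F n alpha inj (fun j => v j ^+ 2 - l * u j)) => m mn.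
    under eq_bigr do rewrite mulrBl -(mulrA l).
    rewrite sumrB -mulr_sumr.
    case: (ltngtP m n.-1) => [mlt|mgt|->]; last by rewrite sumu1 mulr1 subrr.
      by rewrite sumu // mulr0 subr0; apply: Tz; lia.
    lia.
  have l0 : l != 0.
    apply/eqP=> l0; have := wl i0; rewrite l0 mul0r => /eqP.
    by rewrite expf_eq0 /= (negPf (v0 i0)).
  split; last first.
    have := Tz (h + h)%N ltac:(lia); rewrite /T (_ : (h + h = n)%N); last by lia.
    under eq_bigr do rewrite wl -mulrA.
    rewrite -mulr_sumr sumun => /eqP; rewrite mulf_eq0 (negPf l0) /= => /eqP //.
  case: (boolP [exists y, l == y ^+ 2]) => [/existsP [c /eqP lc]|nl].
    have c0 : c != 0 by apply: contraNneq l0 => c0; rewrite lc c0 expr0n.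
    left => j; exists (v j / c).
    by rewrite expr_div_n wl lc mulrC mulKf // expf_neq0.
  right => j [b ub]; apply: (negP nl); apply/existsP; exists (v j / b); apply/eqP.
  have b0 : b != 0 by apply: contraNneq (u0 j) => b0; rewrite /u ub b0 expr0n.
  by rewrite expr_div_n wl /u ub mulfK // expf_neq0.
- case=> r1' [sqs S0].
  have [l [l0 lsq]] : exists l, l != 0 /\ forall j, exists b, l * u j == b ^+ 2.
    case: sqs => [sq|nsq].
      exists 1; split; first exact: oner_neq0.
      by move=> j; case: (sq j) => b ub; exists b; rewrite mul1r /u ub.
    exists (u i0); split; first exact: u0.
    by move=> j; case: (nonsq_mul _ _ _ (nsq i0) (nsq j)) => b ->; exists b.
  pose v j := xchoose (lsq j).
  have vP j : l * u j = v j ^+ 2 := eqP (xchooseP (lsq j)).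
  have vn0 j : v j != 0.
    apply/eqP => vj; have := vP j; rewrite vj expr0n /= => /eqP.
    by rewrite mulf_eq0 (negPf l0) (negPf (u0 j)).
  exists v; split => //.
  apply: self_dual_of; first by lia.
    by apply: Chv_row_free => //; lia.
  apply/matrixP => i i'; rewrite gram mxE.
  under eq_bigr do rewrite -vP -mulrA.
  rewrite -mulr_sumr.
  have : (((if (i < k.-1)%N then nat_of_ord i else h) +
          (if (i' < k.-1)%N then nat_of_ord i' else h)) < n.-1)%N \/
         ((if (i < k.-1)%N then nat_of_ord i else h) +
          (if (i' < k.-1)%N then nat_of_ord i' else h))%N = n.
    by move: (ltn_ord i) (ltn_ord i'); case: ifP; case: ifP; lia.
  case=> [lt|->]; first by rewrite sumu // mulr0.
  by rewrite sumun S0 mulr0.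
Qed.
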